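(* Assume $g$ satisfies (Hg), let $k>0$ and $(a,d)\in(0,1)\times(0,\infty)$. Suppose there exists $A\in(a,1)$ with $$\mathcal J^-(a,d,A,k):=\max_{v\in[0,A]}\big(d(k+1)v-dkA-g(v;a)\big)<0.$$ Then $c(a,d,k)<0$.
   Context: A function $g:\mathbb R\times[0,1]\to\mathbb R$, $(u,a)\mapsto g(u;a)$, satisfies (Hg) if it is $C^1$ and for every $a\in(0,1)$: $g(0;a)=g(a;a)=g(1;a)=0$, $g'(0;a)<0$, $g'(1;a)<0$, $g'(a;a)>0$ (where $g'=\partial_u g$), $g(v;a)>0$ for $v\in(-\infty,0)\cup(a,1)$ and $g(v;a)<0$ for $v\in(0,a)\cup(1,\infty)$. For $k>0$, $a\in(0,1)$, $d>0$ consider the problem: find $c\in\mathbb R$, $\Phi:\mathbb R\to\mathbb R$ with $-c\Phi'(\xi)=d(k\Phi(\xi+1)-(k+1)\Phi(\xi)+\Phi(\xi-1))+g(\Phi(\xi);a)$ for all $\xi$, $\Phi(-\infty)=0$, $\Phi(+\infty)=1$. It is known (Mallet-Paret) that under (Hg) a solution with $\Phi$ non-decreasing exists and the speed $c$ is uniquely determined; it is denoted $c(a,d,k)$. *)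

(* Defs.v *)
From Stdlib Require Import Reals.
From Coquelicot Require Import Coquelicot.
Open Scope R_scope.

(* Joint C^1 regularity of g on R x [0,1]: g is the restriction to R x [0,1]
   of a function G : R -> R -> R whose two partial derivatives exist
   everywhere on R x R and are jointly continuous. *)
Definition C1_on_strip (g : R -> R -> R) : Prop :=
  exists (G Gu Ga : R -> R -> R),
    (forall u a, 0 <= a <= 1 -> G u a = g u a) /\
    (forall u a, is_derive (fun v => G v a) u (Gu u a)) /\
    (forall u a, is_derive (fun b => G u b) a (Ga u a)) /\
    (forall p : R * R, continuous (fun q : R * R => Gu (fst q) (snd q)) p) /\
    (forall p : R * R, continuous (fun q : R * R => Ga (fst q) (snd q)) p).

Definition dg (g : R -> R -> R) (u a : R) : R := Derive (fun v => g v a) u.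

Definition Hg (g : R -> R -> R) : Prop :=
  C1_on_strip g /\
  forall a, 0 < a < 1 ->
    g 0 a = 0 /\ g a a = 0 /\ g 1 a = 0 /\
    dg g 0 a < 0 /\ dg g 1 a < 0 /\ 0 < dg g a a /\
    (forall v, (v < 0 \/ (a < v /\ v < 1)) -> 0 < g v a) /\
    (forall v, ((0 < v /\ v < a) \/ 1 < v) -> g v a < 0).

(* (c, Phi) solves the travelling-wave problem
     -c Phi'(xi) = d (k Phi(xi+1) - (k+1) Phi(xi) + Phi(xi-1)) + g(Phi(xi); a),
     Phi(-oo) = 0, Phi(+oo) = 1.
   When c <> 0, Phi is required to be differentiable everywhere; when c = 0
   the derivative term vanishes and the equation is purely algebraic
   (no regularity of Phi required, as in Mallet-Paret). *)
Definition TW_solution (g : R -> R -> R) (a d k c : R) (Phi : R -> R) : Prop :=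
  (c <> 0 -> forall xi, ex_derive Phi xi) /\
  (forall xi,
     - c * (if Req_EM_T c 0 then 0 else Derive Phi xi)
     = d * (k * Phi (xi + 1) - (k + 1) * Phi xi + Phi (xi - 1)) + g (Phi xi) a) /\
  is_lim Phi m_infty 0 /\
  is_lim Phi p_infty 1.

Definition nondecreasing (Phi : R -> R) : Prop :=
  forall x y, x <= y -> Phi x <= Phi y.

(* Main.v *)
From Stdlib Require Import Reals Lra.
Require Import Defs.
From Coquelicot Require Import Coquelicot.
Open Scope R_scope.

Lemma lim_minf (f : R -> R) (l : R) : is_lim f m_infty l ->
  forall eps, 0 < eps -> exists M, forall x, x < M -> Rabs (f x - l) < eps.
Proof.
  intros H eps He.
  assert (K := H (fun y => Rabs (y - l) < eps)).
  destruct K as [M HM].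
  - exists (mkposreal eps He). intros y Hy. exact Hy.
  - exists M. exact HM.
Qed.

Lemma lim_pinf (f : R -> R) (l : R) : is_lim f p_infty l ->
  forall eps, 0 < eps -> exists M, forall x, M < x -> Rabs (f x - l) < eps.
Proof.
  intros H eps He.
  assert (K := H (fun y => Rabs (y - l) < eps)).
  destruct K as [M HM].
  - exists (mkposreal eps He). intros y Hy. exact Hy.
  - exists M. exact HM.
Qed.

Theorem lemma5p1 :
  forall (g : R -> R -> R), Hg g ->
  forall (k a d : R), 0 < k -> 0 < a < 1 -> 0 < d ->
  (exists A, a < A < 1 /\
     forall v, 0 <= v <= A -> d * (k + 1) * v - d * k * A - g v a < 0) ->
  forall (c : R) (Phi : R -> R),
    TW_solution g a d k c Phi -> nondecreasing Phi -> c < 0.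
Proof.
  intros g _ k a d Hk Ha Hd [A [[HaA HA1] HJ]] c Phi [Hder [Heq [Hm Hp]]] Hnd.
  destruct (Rlt_or_le c 0) as [Hc|Hc]; [exact Hc|exfalso].
  assert (Hpos : forall x, 0 <= Phi x).
  { intros x. destruct (Rle_or_lt 0 (Phi x)) as [h|h]; [exact h|].
    destruct (lim_minf Phi 0 Hm (- Phi x) ltac:(lra)) as [M HM].
    set (y := Rmin x (M - 1)).
    assert (Hy1 : y <= x) by (unfold y; apply Rmin_l).
    assert (Hy2 : y < M) by (unfold y; generalize (Rmin_r x (M-1)); lra).
    specialize (HM y Hy2). specialize (Hnd y x Hy1).
    rewrite Rminus_0_r in HM. apply Rabs_def2 in HM. lra. }
  assert (Hineq : forall xi,
    d * (k * Phi (xi + 1) - (k + 1) * Phi xi + Phi (xi - 1)) + g (Phi xi) a <= 0).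
  { intros xi. rewrite <- Heq. destruct (Req_EM_T c 0) as [e|e]; [lra|].
    assert (pr : derivable Phi) by (intro x; apply ex_derive_Reals_0, Hder; exact e).
    assert (H0 := nonneg_derivative_0 Phi pr Hnd xi).
    rewrite Derive_Reals in H0.
    assert (0 < c) by lra.
    assert (0 <= c * Derive Phi xi) by (apply Rmult_le_pos; lra). lra. }
  assert (Hstep : forall xi, Phi xi <= A -> Phi (xi + 1) < A).
  { intros xi h.
    assert (J := HJ (Phi xi) (conj (Hpos xi) h)).
    assert (I := Hineq xi). assert (P := Hpos (xi - 1)).
    assert (d * Phi (xi - 1) >= 0) by nra.
    assert (d * k * (Phi (xi + 1) - A) < 0) by nra.
    assert (0 < d * k) by nra. nra. }
  destruct (lim_minf Phi 0 Hm A ltac:(lra)) as [M HM].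
  set (x0 := M - 1).
  assert (H0 : Phi x0 <= A).
  { specialize (HM x0 ltac:(unfold x0; lra)). rewrite Rminus_0_r in HM.
    apply Rabs_def2 in HM. lra. }
  assert (Hall : forall n, Phi (x0 + INR n) <= A).
  { induction n. - simpl. rewrite Rplus_0_r. exact H0.
    - rewrite S_INR, <- Rplus_assoc. left. apply Hstep. exact IHn. }
  destruct (lim_pinf Phi 1 Hp (1 - A) ltac:(lra)) as [N HN].
  destruct (INR_unbounded (N - x0)) as [n Hn].
  specialize (HN (x0 + INR n) ltac:(lra)). apply Rabs_def2 in HN.
  specialize (Hall n). lra.
Qed.
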